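(* Let $t\ge1$ be an integer and $\mathcal{I}\subseteq[K]$. Let $x,y\in\mathbb{R}^K$ with $x_i,y_i\in(0,1]$ for all $i\in\mathcal{I}$ and $\sum_{i\in\mathcal{I}}x_i=\sum_{i\in\mathcal{I}}y_i$, and suppose there is $c\in\mathbb{R}$ with $\nabla\phi^{t}_{\mathcal{I}}(y)=\nabla\phi^t_{\mathcal{I}}(x)-\hat\ell^t_{\mathcal{I}}+c\cdot\mathbf{1}_{\mathcal{I}}$. Then $\sum_{i\in\mathcal{I}}y_i^{4/3}\le8\sum_{i\in\mathcal{I}}x_i^{4/3}$.
   Context: $\phi^s(x)=-3K^{1/6}\sqrt{s}\sum_{i\in[K]}x_i^{2/3}$ (the $2/3$-Tsallis regularizer of Decoupled-Tsallis-INF) and $\phi^s_{\mathcal{I}}(x)=-3K^{1/6}\sqrt{s}\sum_{i\in\mathcal{I}}x_i^{2/3}$. For a vector $v$, $v_{\mathcal{I}}$ agrees with $v$ on $\mathcal{I}$ and is $0$ elsewhere; $\mathbf{1}_{\mathcal{I}}$ is the indicator vector of $\mathcal{I}$. $\hat\ell^t$ is the loss estimator of Decoupled-Tsallis-INF: $\hat\ell^t_i=\mathbb{1}\{j^t=i\}\ell^t_i/g^t_i$ for some $j^t\in[K]$, $\ell^t\in[0,1]^K$ and a probability vector $g^t$ with positive entries. *)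

(* Defs.v *)
From HB Require Import structures.
From mathcomp Require Import all_boot all_order all_algebra.
From mathcomp Require Import all_classical all_reals all_analysis.
Set Implicit Arguments. Unset Strict Implicit. Unset Printing Implicit Defensive.
Import Order.TTheory GRing.Theory Num.Theory.
Local Open Scope ring_scope.

Definition tsallisI (R : realType) (K : nat) (s : R) (I : {set 'I_K})
  (x : 'I_K -> R) : R :=
  - 3 * ((K%:R : R) `^ (6^-1)) * Num.sqrt s * \sum_(i in I) (x i `^ (2 / 3)).

Definition grad_vec (R : realType) (K : nat) (f : ('I_K -> R) -> R)
  (x : 'I_K -> R) : 'I_K -> R :=
  fun i => derive1 (fun u : R => f (fun k => x k + (if k == i then u else 0))) 0.

Definition restr_vec (R : realType) (K : nat) (I : {set 'I_K}) (v : 'I_K -> R)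
  : 'I_K -> R := fun i => if i \in I then v i else 0.

Definition ind_vec (R : realType) (K : nat) (I : {set 'I_K}) : 'I_K -> R :=
  fun i => if i \in I then 1 else 0.

Definition loss_est (R : realType) (K : nat) (j : 'I_K) (ell g : 'I_K -> R)
  : 'I_K -> R := fun i => if i == j then ell i / g i else 0.

(* Main.v *)
Require Import Defs.
From HB Require Import structures.
From mathcomp Require Import all_boot all_order all_algebra.
From mathcomp Require Import all_classical all_reals all_analysis.
From mathcomp Require Import ring lra.
Import Order.TTheory GRing.Theory Num.Theory.
Local Open Scope ring_scope.

Lemma derive_pow_shift (R : realType) (a A C b : R) : 0 < b ->
  derive1 (fun u : R => C * ((b + u) `^ a + A)) 0 = C * (a * b `^ (a - 1)).
Proof.
move=> b0.
set h := fun u : R => (b + u) `^ a.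
have hE : h = (fun z : R => z `^ a) \o (fun u => u + b).
  by apply/funext => u /=; rewrite /h addrC.
have dsh : derivable (fun u : R => u + b) 0 1.
  exact: ex_derive.
have dpw : derivable (fun z : R => z `^ a) ((fun u : R => u + b) 0) 1.
  by apply: derivable_powR; rewrite /= add0r in_itv /= b0.
have dh : derivable h 0 1.
  rewrite hE; apply/derivable1_diffP; apply: differentiable_comp.
  exact/derivable1_diffP.
  exact/derivable1_diffP.
have hd : derive1 h 0 = a * b `^ (a - 1).
  rewrite hE derive1_comp //= add0r.
  rewrite powR_derive1 ?in_itv /= ?b0 //.
  have -> : derive1 (fun u : R => u + b) 0 = 1.
    by rewrite derive1E (@derive_val _ _ _ _ _ _ _ (is_derive_shift _ _ _)).
  by rewrite mulr1.
have ih : is_derive (0:R) 1 h (derive1 h 0).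
  by apply: DeriveDef => //; rewrite derive1E.
have ic : is_derive (0:R) 1 (C \*: (h + cst A)) (C *: (derive1 h 0 + 0)).
  by apply: is_deriveZ; apply: is_deriveD.
have -> : (fun u : R => C * ((b + u) `^ a + A)) = C \*: (h + cst A).
  by apply/funext => u.
rewrite derive1E derive_val addr0 hd //.
Qed.

Lemma aux_qb (R : realType) (a b q : R) : 0 <= a -> 0 <= b -> 0 <= q ->
  q ^+ 3 <= a ^+ 3 + b ^+ 3 -> q * b ^+ 3 <= 2 * a ^+ 4 \/ q * b ^+ 3 <= 2 * b ^+ 4.
Proof.
move=> a0 b0 q0 h.
case: (leP a b) => ab.
- right.
  have qb : q <= 2 * b.
    rewrite leNgt; apply/negP => qb.
    have : (2 * b) ^+ 3 < q ^+ 3 by rewrite ltrXn2r // mulr_ge0.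
    have : a ^+ 3 <= b ^+ 3 by rewrite lerXn2r.
    move: h; rewrite exprMn; nra.
  have b3 : 0 <= b ^+ 3 by rewrite exprn_ge0.
  rewrite [b ^+ 4]exprS mulrA; by apply: ler_wpM2r.
- left.
  have qb : q <= 2 * a.
    rewrite leNgt; apply/negP => qb.
    have : (2 * a) ^+ 3 < q ^+ 3 by rewrite ltrXn2r // ?mulr_ge0.
    have : b ^+ 3 <= a ^+ 3 by rewrite lerXn2r // ltW.
    move: h; rewrite exprMn; nra.
  have b3 : 0 <= b ^+ 3 by rewrite exprn_ge0.
  have ba : b ^+ 3 <= a ^+ 3 by rewrite lerXn2r // ltW.
  have := ler_wpM2r b3 qb.
  have a3 : 0 <= a ^+ 3 by rewrite exprn_ge0.
  have : 2 * a * b ^+ 3 <= 2 * a * a ^+ 3 by rewrite ler_wpM2l // mulr_ge0.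
  rewrite [a ^+ 4]exprS mulrA => h1 h2; exact: le_trans h2 h1.
Qed.

Lemma aux_term (R : realType) (p q m : R) : 0 <= p -> p <= q -> q <= m ->
  q ^+ 4 <= p ^+ 4 + 2 * m * (q ^+ 3 - p ^+ 3).
Proof.
move=> p0 pq qm.
have q0 : 0 <= q by apply: le_trans pq.
have d0 : 0 <= q ^+ 3 - p ^+ 3 by rewrite subr_ge0 lerXn2r.
have : 2 * q * (q ^+ 3 - p ^+ 3) <= 2 * m * (q ^+ 3 - p ^+ 3).
  by rewrite ler_wpM2r // ler_wpM2l.
suff : q ^+ 4 <= p ^+ 4 + 2 * q * (q ^+ 3 - p ^+ 3) by move=> h1 h2; lra.
have e : p ^+ 4 + 2 * q * (q ^+ 3 - p ^+ 3) - q ^+ 4 =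
   (q - p) * (q * (q ^+ 2 + q * p + p ^+ 2) - p ^+ 3) by ring.
rewrite -subr_ge0 e; apply: mulr_ge0; first by rewrite subr_ge0.
rewrite subr_ge0.
have : p ^+ 3 <= q ^+ 3 by rewrite lerXn2r.
have : 0 <= q * p + p ^+ 2 by rewrite addr_ge0 ?mulr_ge0 ?exprn_ge0.
move=> h1 h2; rewrite mulrDr mulrDr -exprS.
have : 0 <= q * (q * p) + q * p ^+ 2 by rewrite addr_ge0 ?mulr_ge0 ?exprn_ge0.
lra.
Qed.

Lemma sum_term_le (R : realType) K (I : {set 'I_K}) (F : 'I_K -> R) k :
  (forall i, i \in I -> 0 <= F i) -> k \in I -> F k <= \sum_(i in I) F i.
Proof.
move=> F0 kI; rewrite (bigD1 k) //= lerDl; apply: sumr_ge0 => i /andP[iI _].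
exact: F0.
Qed.

Lemma core (R : realType) K (I : {set 'I_K}) (j : 'I_K) (p q : 'I_K -> R) :
 (forall i, i \in I -> 0 <= p i) -> (forall i, i \in I -> 0 <= q i) ->
 \sum_(i in I) p i ^+ 3 = \sum_(i in I) q i ^+ 3 ->
 (forall i, i \in I -> i != j -> p i <= q i) ->
 \sum_(i in I) q i ^+ 4 <= 8 * \sum_(i in I) p i ^+ 4.
Proof.
move=> p0 q0 e3 pq.
case: (set_0Vmem I) => [-> | [k0 k0I]]; first by rewrite !big_set0 mulr0.
case: (@arg_maxP _ _ _ k0 (mem I) q k0I) => k kI0 kmax.
have kI : k \in I := kI0.
set T := \sum_(i in I) p i ^+ 4.
have T0 : 0 <= T by apply: sumr_ge0 => i iI; rewrite exprn_ge0 ?p0.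
have hT : forall i, i \in I -> p i ^+ 4 <= T.
  by move=> i iI; apply: (@sum_term_le R K I (fun i => p i ^+ 4)) => // l lI; rewrite exprn_ge0 ?p0.
set S := \sum_(i in I | i != j) (q i ^+ 3 - p i ^+ 3).
have S0 : 0 <= S.
  apply: sumr_ge0 => i /andP[iI ij]; rewrite subr_ge0 lerXn2r ?nnegrE ?p0 ?q0 //; exact: pq.
have step1 : \sum_(i in I | i != j) q i ^+ 4 <= \sum_(i in I | i != j) p i ^+ 4 + 2 * q k * S.
  rewrite /S mulr_sumr -big_split /=; apply: ler_sum => l /andP[lI lj].
  by apply: aux_term; [exact: p0 | exact: pq | exact: kmax].
case: (boolP (j \in I)) => jI; last first.
  have E : forall F : 'I_K -> R, \sum_(i in I | i != j) F i = \sum_(i in I) F i.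
    move=> F; apply: eq_bigl => l; case: (boolP (l \in I)) => //= lI.
    by apply/eqP => lj; move: jI; rewrite -lj lI.
  have : S = 0 by rewrite /S E sumrB e3 subrr.
  move: step1; rewrite !E -/T => h1 h2; move: h1; rewrite h2 mulr0 addr0 => h1.
  lra.
have eS : S = p j ^+ 3 - q j ^+ 3.
  move: e3; rewrite /S sumrB (bigD1 j jI) [X in _ = X -> _](bigD1 j jI) /=; lra.
have qjpj3 : q j ^+ 3 <= p j ^+ 3 by lra.
have qjpj : q j <= p j by rewrite -(@ler_pXn2r _ 3) ?nnegrE ?p0 ?q0.
have qk3 : q k ^+ 3 <= p k ^+ 3 + p j ^+ 3.
  case: (eqVneq k j) => [-> | kj].
    by have := exprn_ge0 3 (p0 _ jI); lra.
  have : q k ^+ 3 - p k ^+ 3 <= S.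
    rewrite /S (bigD1 k) /=; last by rewrite kI kj.
    rewrite lerDl; apply: sumr_ge0 => i /andP[/andP[iI ij] _].
    by rewrite subr_ge0 lerXn2r ?nnegrE ?p0 ?q0 //; exact: pq.
  by have := exprn_ge0 3 (q0 _ jI); lra.
have hq : q k * S <= 2 * T.
  have : q k * S <= q k * p j ^+ 3.
    by rewrite eS mulrBr; have := mulr_ge0 (q0 _ kI) (exprn_ge0 3 (q0 _ jI)); lra.
  case: (@aux_qb R (p k) (p j) (q k) (p0 _ kI) (p0 _ jI) (q0 _ kI) qk3) => h;
    [have := hT _ kI | have := hT _ jI]; lra.
have qj4 : q j ^+ 4 <= p j ^+ 4 by rewrite lerXn2r ?nnegrE ?p0 ?q0.
rewrite (bigD1 j jI) /= [X in _ <= 8 * X](bigD1 j jI) /=.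
have : p j ^+ 4 + \sum_(i in I | i != j) p i ^+ 4 = T by rewrite /T (bigD1 j jI).
lra.
Qed.

Lemma grad_in (R : realType) (K : nat) (s : R) (I : {set 'I_K}) (x : 'I_K -> R) i :
  i \in I -> 0 < x i ->
  grad_vec (tsallisI s I) x i =
  (- 3 * ((K%:R : R) `^ (6^-1)) * Num.sqrt s) * (2 / 3 * x i `^ (2 / 3 - 1)).
Proof.
move=> iI xi0; rewrite /grad_vec /tsallisI.
rewrite -(@derive_pow_shift R (2 / 3) (\sum_(k in I | k != i) x k `^ (2 / 3)) _ _ xi0).
congr (derive1 _ 0); apply/funext => u; congr (_ * _).
rewrite (bigD1 i iI) /= eqxx; congr (_ + _).
by apply: eq_bigr => k /andP[_ /negbTE ->]; rewrite addr0.
Qed.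

Lemma grad_out (R : realType) (K : nat) (s : R) (I : {set 'I_K}) (x : 'I_K -> R) i :
  i \notin I -> grad_vec (tsallisI s I) x i = 0.
Proof.
move=> iI; rewrite /grad_vec /tsallisI.
have -> : (fun u : R => - 3 * ((K%:R : R) `^ (6^-1)) * Num.sqrt s *
    \sum_(k in I) (x k + (if k == i then u else 0)) `^ (2 / 3)) =
    cst (- 3 * ((K%:R : R) `^ (6^-1)) * Num.sqrt s * \sum_(k in I) x k `^ (2 / 3)).
  apply/funext => u /=; congr (_ * _); apply: eq_bigr => k kI.
  have -> : (k == i) = false by apply/eqP => ki; move: iI; rewrite -ki kI.
  by rewrite addr0.
exact: derive1_cst.
Qed.

Lemma pow_facts (R : realType) (v : R) : 0 < v ->
  [/\ 0 < v `^ (1/3), v = (v `^ (1/3)) ^+ 3, v `^ (4/3) = (v `^ (1/3)) ^+ 4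
    & v `^ (2/3 - 1) = (v `^ (1/3))^-1].
Proof.
move=> v0; have r0 : 0 <= v `^ (1/3) by apply: powR_ge0.
split.
- exact: powR_gt0.
- by rewrite -powR_mulrn // -powRrM mul1r mulVf ?pnatr_eq0 // powRr1 // ltW.
- by rewrite -powR_mulrn // -powRrM mul1r mulrC.
- have -> : (2/3 - 1 : R) = - (1/3) by field.
  by rewrite powRN.
Qed.

Theorem corollary1 (R : realType) (K : nat) (t : nat) (I : {set 'I_K})
  (x y : 'I_K -> R) (j : 'I_K) (ell g : 'I_K -> R) (c : R) :
  (1 <= t)%N ->
  (forall i, 0 <= ell i <= 1) ->
  (forall i, 0 < g i) ->
  \sum_i g i = 1 ->
  (forall i, i \in I -> 0 < x i <= 1) ->
  (forall i, i \in I -> 0 < y i <= 1) ->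
  \sum_(i in I) x i = \sum_(i in I) y i ->
  grad_vec (tsallisI t%:R I) y =
    (fun i => grad_vec (tsallisI t%:R I) x i - restr_vec I (loss_est j ell g) i + c * ind_vec R I i) ->
  \sum_(i in I) (y i `^ (4 / 3)) <= 8 * \sum_(i in I) (x i `^ (4 / 3)).
Proof.
move=> t1 ell01 g0 gsum hx hy hsum H.
case: (set_0Vmem I) => [-> | [k0 k0I]]; first by rewrite !big_set0 mulr0.
have K0 : (0 < K)%N by apply: leq_ltn_trans (ltn_ord k0).
set C := - 3 * ((K%:R : R) `^ (6^-1)) * Num.sqrt t%:R.
set D := - C * (2/3).
have D0 : 0 < D.
  rewrite /D /C !mulNr opprK; apply: mulr_gt0 => //.
  apply: mulr_gt0; last by rewrite sqrtr_gt0 ltr0n.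
  by apply: mulr_gt0 => //; apply: powR_gt0; rewrite ltr0n.
set p := fun i => x i `^ (1/3).
set q := fun i => y i `^ (1/3).
have xpos : forall i, i \in I -> 0 < x i by move=> i /hx /andP[].
have ypos : forall i, i \in I -> 0 < y i by move=> i /hy /andP[].
set l := fun i => if i == j then ell i / g i else 0.
have l0 : forall i, 0 <= l i.
  move=> i; rewrite /l; case: eqP => // _.
  by apply: divr_ge0; [case/andP: (ell01 i) | exact: ltW].
have key : forall i, i \in I -> D / q i = D / p i + l i - c.
  move=> i iI.
  have := congr1 (fun f => f i) H => /=.
  rewrite !grad_in ?xpos ?ypos // /restr_vec /ind_vec iI mulr1 -/C.
  case: (pow_facts _ _ (xpos _ iI)) => _ _ _ ->.
  case: (pow_facts _ _ (ypos _ iI)) => _ _ _ ->.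
  rewrite /loss_est -/l -/(p i) -/(q i) /D => E.
  rewrite /l; move: E; set u := (if i == j then _ else _) => E.
  apply/eqP; rewrite -subr_eq0; apply/eqP.
  transitivity (- (C * (2 / 3 / q i) - (C * (2 / 3 / p i) - u + c))); first by ring.
  by rewrite E subrr oppr0.
have ppos : forall i, i \in I -> 0 < p i by move=> i iI; case: (pow_facts _ _ (xpos _ iI)).
have qpos : forall i, i \in I -> 0 < q i by move=> i iI; case: (pow_facts _ _ (ypos _ iI)).
have c0 : 0 <= c.
  rewrite leNgt; apply/negP => c0.
  have lt : forall i, i \in I -> q i < p i.
    move=> i iI.
    have : D / p i < D / q i by rewrite key //; have := l0 i; lra.
    rewrite ltr_pM2l // ltf_pV2 // ?posrE ?ppos ?qpos //.
  move: hsum; apply/eqP; rewrite gt_eqF //.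
  rewrite (bigD1 k0 k0I) [X in _ < X](bigD1 k0 k0I) /=.
  apply: ltr_leD.
    case: (pow_facts _ _ (xpos _ k0I)) => _ -> _ _.
    case: (pow_facts _ _ (ypos _ k0I)) => _ -> _ _.
    by rewrite ltrXn2r ?nnegrE ?ltW ?ppos ?qpos ?lt.
  apply: ler_sum => i /andP[iI _].
  case: (pow_facts _ _ (xpos _ iI)) => _ -> _ _.
  case: (pow_facts _ _ (ypos _ iI)) => _ -> _ _.
  by rewrite lerXn2r ?nnegrE ?ltW ?ppos ?qpos ?lt.
have pq : forall i, i \in I -> i != j -> p i <= q i.
  move=> i iI ij.
  have : D / q i <= D / p i.
    by rewrite key // /l (negbTE ij); lra.
  by rewrite ler_pM2l // lef_pV2 // ?posrE ?ppos ?qpos.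
have ex : \sum_(i in I) x i `^ (4 / 3) = \sum_(i in I) p i ^+ 4.
  by apply: eq_bigr => i iI; case: (pow_facts _ _ (xpos _ iI)).
have ey : \sum_(i in I) y i `^ (4 / 3) = \sum_(i in I) q i ^+ 4.
  by apply: eq_bigr => i iI; case: (pow_facts _ _ (ypos _ iI)).
rewrite ex ey; apply: (@core R K I j p q).
- by move=> i iI; apply: ltW; apply: ppos.
- by move=> i iI; apply: ltW; apply: qpos.
- rewrite -(eq_bigr _ (fun i iI => (let: And4 _ e _ _ := pow_facts _ _ (xpos i iI) in e))).
  by rewrite -(eq_bigr _ (fun i iI => (let: And4 _ e _ _ := pow_facts _ _ (ypos i iI) in e))).
- exact: pq.
Qed.
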